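(* Let $G$ be a graph with no massive edges and let $X=\{x_1,x_2,x_3,x_4\}\subseteq V(G)$ be the set of vertices with external momenta, all on-shell. Suppose $G$ has a $1$-separation $(A,B)$ with $A\cap B=\{v\}$, $X\cap(A\setminus\{v\})=\{x_1,x_2\}$ and $X\cap(B\setminus\{v\})=\{x_3,x_4\}$. Let $A'$ be $G[A]$ with the same external momenta and Schwinger parameters as in $G$ except that the momentum at $v$ is $\rho_{x_3}+\rho_{x_4}$, and let $B'$ be $G[B]$ with the same data as in $G$ except that the momentum at $v$ is $\rho_{x_1}+\rho_{x_2}$. Then $\phi_G=\phi_{A'}\psi_{B'}+\phi_{B'}\psi_{A'}$.
   Context: A $1$-separation is a pair $(A,B)$ with $A\cup B=V(G)$, $|A\cap B|\le1$ and no edge between $A\setminus B$ and $B\setminus A$. Each edge $e$ has a variable $\alpha_e$ and a mass $m_e$ (massive if $m_e\neq0$); each vertex $u$ has $\rho_u\in\mathbb{R}^4$, zero outside $X$, with $\sum_u\rho_u=0$. $\rho^2=\rho_1^2+\rho_2^2+\rho_3^2-\rho_4^2$ and $\rho_u$ is on-shell if $\rho_u^2=0$. $\psi_G=\sum_T\prod_{e\notin E(T)}\alpha_e$ over spanning trees $T$. A spanning 2-forest is an unordered pair $(T_1,T_2)$ of vertex-disjoint trees covering $V(G)$; $\rho^{H}=\sum_{u\in V(H)}\rho_u$; $\phi_G=\sum_{(T_1,T_2)}(\rho^{T_1})^2\prod_{e\notin E(T_1)\cup E(T_2)}\alpha_e+\psi_G\sum_e\alpha_em_e^2$. *)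

(* Defs.v *)
From HB Require Import structures.
From mathcomp Require Import all_boot all_order all_algebra.
Set Implicit Arguments. Unset Strict Implicit. Unset Printing Implicit Defensive.
Import Order.TTheory GRing.Theory Num.Theory.
Local Open Scope ring_scope.

(* Subgraphs are induced subgraphs G[A] for A : {set V}; G itself is G[setT]. *)
Section GraphPolys.
Variables (V E : finType) (ends : E -> V * V).

Definition adj (F : {set E}) : rel V := fun x y =>
  [exists e in F, (((ends e).1 == x) && ((ends e).2 == y))
                || (((ends e).1 == y) && ((ends e).2 == x))].

Definition induced_edges (A : {set V}) : {set E} :=
  [set e | ((ends e).1 \in A) && ((ends e).2 \in A)].

Definition acyclic (F : {set E}) : bool :=
  [forall e in F, ~~ connect (adj (F :\ e)) (ends e).1 (ends e).2].

Definition tree_on (S : {set V}) (T : {set E}) : bool :=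
  [&& S != set0, T \subset induced_edges S, acyclic T &
      [forall x in S, forall y in S, connect (adj T) x y]].

Definition spanning_tree (A : {set V}) (T : {set E}) : bool := tree_on A T.

(* ordered spanning 2-forest (T1,T2) of G[A], with V(T1) = S, V(T2) = A \ S,
   encoded by S and the edge set F = E(T1) u E(T2) *)
Definition two_forest (A S : {set V}) (F : {set E}) : bool :=
  [&& S \subset A,
      F \subset induced_edges S :|: induced_edges (A :\: S),
      tree_on S (F :&: induced_edges S) &
      tree_on (A :\: S) (F :&: induced_edges (A :\: S))].

Variable R : realFieldType.

Definition msq (r : 'rV[R]_4) : R :=
  r ord0 (0 : 'I_4) ^+ 2 + r ord0 (1 : 'I_4) ^+ 2 + r ord0 (2 : 'I_4) ^+ 2
  - r ord0 (3 : 'I_4) ^+ 2.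

Definition mom (rho : V -> 'rV[R]_4) (S : {set V}) : 'rV[R]_4 :=
  \sum_(u in S) rho u.

Definition psi (A : {set V}) (alpha : E -> R) : R :=
  \sum_(T : {set E} | spanning_tree A T)
     \prod_(e in induced_edges A :\: T) alpha e.

(* second Symanzik polynomial of G[A], evaluated at alpha.
   The sum over unordered spanning 2-forests {T1,T2} is written as half the
   sum over ordered pairs (T1,T2). *)
Definition phi (A : {set V}) (rho : V -> 'rV[R]_4) (alpha m : E -> R) : R :=
  2^-1 * (\sum_(S : {set V}) \sum_(F : {set E} | two_forest A S F)
            msq (mom rho S) * \prod_(e in induced_edges A :\: F) alpha e)
  + psi A alpha * \sum_(e in induced_edges A) alpha e * m e ^+ 2.

End GraphPolys.

Definition one_separation (V E : finType) (ends : E -> V * V) (A B : {set V}) : bool :=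
  (A :|: B == setT) && (#|A :&: B| <= 1)%N &&
  [forall e : E, ~~ ((((ends e).1 \in A :\: B) && ((ends e).2 \in B :\: A))
                  || (((ends e).1 \in B :\: A) && ((ends e).2 \in A :\: B)))].

(* Main.v *)
Require Import Defs.
From HB Require Import structures.
From mathcomp Require Import all_boot all_order all_algebra.
Import Order.TTheory GRing.Theory Num.Theory.
Set Implicit Arguments. Unset Strict Implicit. Unset Printing Implicit Defensive.
Ltac bcase := rewrite /induced_edges ?inE;
  repeat match goal with |- context[?x \in ?X] => case: (x \in X) end;
  try (intros; simpl in *;
    repeat match goal with H : is_true true -> _ |- _ => specialize (H isT) end;
    match goal with H : is_true false |- _ => discriminate H | _ => done end).

Section G.
Variables (V E : finType) (ends : E -> V * V).
Local Notation IE := (induced_edges ends).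
Local Notation ADJ := (adj ends).

Lemma conn_closed (e : rel V) (P : V -> Prop) x y :
  P x -> (forall a b, P a -> e a b -> P b) -> connect e x y -> P y.
Proof.
move=> Px step /connectP[p pth ->]; elim: p x Px pth => //= z p IH x Px /andP[exz pz].
exact: IH (step _ _ Px exz) pz.
Qed.

Lemma adjP (F : {set E}) a b : reflect (exists2 e, e \in F &
   ((ends e).1 = a /\ (ends e).2 = b) \/ ((ends e).1 = b /\ (ends e).2 = a)) (ADJ F a b).
Proof.
apply: (iffP existsP) => [[e /andP[eF /orP[/andP[/eqP h1 /eqP h2]|/andP[/eqP h1 /eqP h2]]]]|[e eF [[h1 h2]|[h1 h2]]]].
- by exists e => //; left.
- by exists e => //; right.
- by exists e; rewrite eF h1 h2 !eqxx.
- by exists e; rewrite eF h1 h2 !eqxx orbT.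
Qed.

Lemma adj_sub (F F' : {set E}) : F \subset F' -> subrel (ADJ F) (connect (ADJ F')).
Proof.
move=> /subsetP sFF' a b /adjP[e eF H]; apply: connect1; apply/adjP; exists e => //.
exact: sFF'.
Qed.

Lemma connect_mono (F F' : {set E}) x y : F \subset F' -> connect (ADJ F) x y -> connect (ADJ F') x y.
Proof. by move=> s; apply: connect_sub; apply: adj_sub. Qed.

Lemma inIE e S : (e \in IE S) = ((ends e).1 \in S) && ((ends e).2 \in S).
Proof. by rewrite inE. Qed.

Lemma conn_stay (F : {set E}) C x y : F \subset IE C -> x \in C -> connect (ADJ F) x y -> y \in C.
Proof.
move=> /subsetP sF xC; apply: (conn_closed (P := fun z => z \in C)) => // a b aC.
move=> /adjP[e /sF]; rewrite inIE => /andP[h1 h2] [[e1 e2]|[e1 e2]].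
- by rewrite -e2.
- by rewrite -e1.
Qed.

Lemma IE_mono (S S' : {set V}) : S \subset S' -> IE S \subset IE S'.
Proof.
move=> /subsetP sS; apply/subsetP => e; rewrite !inIE => /andP[h1 h2].
by rewrite !sS.
Qed.

Section Core.
Variables (A B : {set V}) (v : V).
Hypothesis AB : A :&: B \subset [set v].

Lemma inAB z : z \in A -> z \in B -> z = v.
Proof. by move=> zA zB; have := subsetP AB z; rewrite !inE zA zB => /(_ isT)/eqP. Qed.

Lemma core (FA FB : {set E}) x y : FA \subset IE A -> FB \subset IE B -> x \in A ->
  connect (ADJ (FA :|: FB)) x y ->
  (y \in A -> connect (ADJ FA) x y) /\
  (y \in B -> connect (ADJ FA) x v /\ connect (ADJ FB) v y).
Proof.
move=> /subsetP sA /subsetP sB xA.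
apply: (conn_closed (P := fun y => (y \in A -> connect (ADJ FA) x y) /\
  (y \in B -> connect (ADJ FA) x v /\ connect (ADJ FB) v y))).
  split=> // xB; rewrite -(inAB xA xB); split; exact: connect0.
move=> a b [PA PB] /adjP[e]; rewrite inE => /orP[eA|eB] H.
- have := sA _ eA; rewrite inIE => /andP[h1 h2].
  have [aA bA] : a \in A /\ b \in A by case: H => -[<- <-].
  have cab : connect (ADJ FA) x b.
    apply: connect_trans (PA aA) (connect1 _); apply/adjP; exists e => //.
  split=> // bB; rewrite -(inAB bA bB); split=> //; exact: connect0.
- have := sB _ eB; rewrite inIE => /andP[h1 h2].
  have [aB bB] : a \in B /\ b \in B by case: H => -[<- <-].
  have [c1 c2] := PB aB.
  have cvb : connect (ADJ FB) v b.
    apply: connect_trans c2 (connect1 _); apply/adjP; exists e => //.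
  split=> // bA; by rewrite (inAB bA bB).
Qed.
End Core.
Section Glue.
Variables (A B : {set V}) (v : V).
Hypothesis AB : A :&: B \subset [set v].

Lemma acyc_glue (FA FB : {set E}) : FA \subset IE A -> FB \subset IE B ->
  acyclic ends (FA :|: FB) = acyclic ends FA && acyclic ends FB.
Proof.
move=> sA sB; apply/idP/andP.
- move=> /forall_inP H; split; apply/forall_inP => e eF; apply/negP => C;
  have /negP := H e ltac:(by rewrite inE eF ?orbT); apply;
  (apply: connect_mono C; rewrite setDUl); [exact: subsetUl|exact: subsetUr].
- case=> /forall_inP HA /forall_inP HB; apply/forall_inP => e; rewrite inE => /orP[eA|eB];
  apply/negP; rewrite setDUl => C.
  + have := subsetP sA e eA; rewrite inIE => /andP[h1 h2].
    have [+ _] := core AB (subset_trans (subsetDl FA [set e]) sA) (subset_trans (subsetDl FB [set e]) sB) h1 C.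
    by move=> /(_ h2); apply/negP; apply: HA.
  + have := subsetP sB e eB; rewrite inIE => /andP[h1 h2].
    rewrite setUC in C.
    have AB' : B :&: A \subset [set v] by rewrite setIC.
    have [+ _] := core (A:=B) (B:=A) AB' (subset_trans (subsetDl FB [set e]) sB) (subset_trans (subsetDl FA [set e]) sA) h1 C.
    by move=> /(_ h2); apply/negP; apply: HB.
Qed.

Hypotheses (vA : v \in A) (vB : v \in B).

Lemma tree_glue (T : {set E}) : T \subset IE A :|: IE B ->
  tree_on ends (A :|: B) T = tree_on ends A (T :&: IE A) && tree_on ends B (T :&: IE B).
Proof.
move=> sT.
have eT : T = (T :&: IE A) :|: (T :&: IE B) by rewrite -setIUr; apply/esym/setIidPl.
have sA : T :&: IE A \subset IE A := subsetIr _ _.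
have sB : T :&: IE B \subset IE B := subsetIr _ _.
have AB' : B :&: A \subset [set v] by rewrite setIC.
rewrite /tree_on; apply/idP/andP.
- case/and4P => _ sTW acT /forall_inP conn.
  rewrite eT acyc_glue // in acT; case/andP: acT => aA aB.
  split; apply/and4P; split => //.
  + by apply/set0Pn; exists v.
  + apply/forall_inP => x xA; apply/forall_inP => y yA.
    have xW : x \in A :|: B by rewrite inE xA.
    have yW : y \in A :|: B by rewrite inE yA.
    have := conn x xW; move/forall_inP/(_ y yW).
    move=> c; rewrite eT in c; have [H _] := core AB sA sB xA c; exact: (H yA).
  + by apply/set0Pn; exists v.
  + apply/forall_inP => x xB; apply/forall_inP => y yB.
    have xW : x \in A :|: B by rewrite inE xB orbT.
    have yW : y \in A :|: B by rewrite inE yB orbT.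
    have := conn x xW; move/forall_inP/(_ y yW).
    move=> c; rewrite eT setUC in c; have [H _] := core AB' sB sA xB c; exact: H yB.
- case=> /and4P[_ sA' aA /forall_inP cA] /and4P[_ sB' aB /forall_inP cB]; apply/and4P; split.
  + by apply/set0Pn; exists v; rewrite inE vA.
  + apply: subset_trans sT _; rewrite subUset; apply/andP; split; apply: IE_mono.
    exact: subsetUl. exact: subsetUr.
  + by rewrite eT acyc_glue // aA aB.
  + have cA' : forall x y, x \in A -> y \in A -> connect (ADJ T) x y.
      move=> x y xA yA; apply: connect_mono (subsetIl T (IE A)) _.
      by move/forall_inP: (cA x xA); apply.
    have cB' : forall x y, x \in B -> y \in B -> connect (ADJ T) x y.
      move=> x y xB yB; apply: connect_mono (subsetIl T (IE B)) _.
      by move/forall_inP: (cB x xB); apply.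
    apply/forall_inP => x; rewrite inE => /orP[xA|xB]; apply/forall_inP => y; rewrite inE => /orP[yA|yB].
    * exact: cA'.
    * exact: connect_trans (cA' _ _ xA vA) (cB' _ _ vB yB).
    * exact: connect_trans (cB' _ _ xB vB) (cA' _ _ vA yA).
    * exact: cB'.
Qed.
End Glue.

Lemma tf_compl (W S : {set V}) (F : {set E}) : S \subset W ->
  two_forest ends W S F -> two_forest ends W (W :\: S) F.
Proof.
move=> sSW /and4P[_ sF t1 t2].
have e : W :\: (W :\: S) = S.
  apply/setP => x; rewrite !inE; have := subsetP sSW x.
  by case: (x \in S); case: (x \in W) => // /(_ isT).
apply/and4P; split.
- exact: subsetDl.
- by rewrite e setUC.
- exact: t2.
- by rewrite e.
Qed.

Section Sep.
Variables (A B : {set V}) (v : V).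
Hypothesis loopless : forall e, (ends e).1 != (ends e).2.
Hypothesis AUB : A :|: B = setT.
Hypothesis AIB : A :&: B = [set v].
Hypothesis cover : forall e, e \in IE A :|: IE B.

Lemma vA : v \in A. Proof. by have := set11 v; rewrite -AIB inE => /andP[]. Qed.
Lemma vB : v \in B. Proof. by have := set11 v; rewrite -AIB inE => /andP[]. Qed.
Lemma covx x : (x \in A) || (x \in B).
Proof. by have := in_setT x; rewrite -AUB inE. Qed.
Lemma AIBx x : x \in A -> x \in B -> x = v.
Proof. by move=> xA xB; have := in_setI x A B; rewrite xA xB AIB inE => /eqP. Qed.

Definition aP (S : {set V}) (F : {set E}) : bool :=
  [&& two_forest ends A (S :&: A) (F :&: IE A), tree_on ends B (F :&: IE B) &
      S :&: B == (if v \in S then B else set0)].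

Lemma aP_compl1 S F : aP S F -> aP (~: S) F.
Proof.
case/and3P => t1 t2 /eqP h; apply/and3P; split.
- have -> : ~: S :&: A = A :\: (S :&: A).
    by apply/setP => x; rewrite !inE; case: (x \in S); case: (x \in A).
  by apply: tf_compl t1; exact: subsetIr.
- exact: t2.
- rewrite inE; case vS: (v \in S) h => /= /setP h; apply/eqP/setP => x; have := h x;
  rewrite !inE; by case: (x \in S); case: (x \in B).
Qed.

Lemma aP_compl S F : aP (~: S) F = aP S F.
Proof.
apply/idP/idP; last exact: aP_compl1.
by move/aP_compl1; rewrite setCK.
Qed.


Lemma ABsub : A :&: B \subset [set v]. Proof. by rewrite AIB. Qed.

Lemma split_cover (T : {set E}) : T = (T :&: IE A) :|: (T :&: IE B).
Proof. by rewrite -setIUr; apply/esym/setIidPl; apply/subsetP => e _; exact: cover. Qed.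

Lemma comp S F : two_forest ends setT S F -> v \in S -> (~: S \subset A) || (~: S \subset B).
Proof.
case/and4P => _ sF t1 t2 vS; rewrite setTD in t2.
case/and4P: t2 => _ sT2 _ /forall_inP cC.
case: (boolP (~: S \subset A)) => [//|/subsetPn [x xC xnA]].
apply/orP; right; apply/subsetP => y yC; apply/negPn/negP => ynB.
have xB : x \in B by have := covx x; rewrite (negbTE xnA).
have yA : y \in A by have := covx y; rewrite (negbTE ynB) orbF.
have := cC y yC; move/forall_inP/(_ x xC); rewrite (split_cover (F :&: IE (~: S))) => c.
have [_ /(_ xB) [c2 _]] := core ABsub (subsetIr _ _) (subsetIr _ _) yA c.
have sub : F :&: IE (~: S) :&: IE A \subset IE (~: S).
  by apply: subset_trans (subsetIl _ _) (subsetIr _ _).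
have := conn_stay sub yC c2; by rewrite inE vS.
Qed.

Lemma bwd_v (S : {set V}) (F : {set E}) : v \in S -> aP S F -> two_forest ends setT S F.
Proof.
move=> vS /and3P[tA tB /eqP h]; rewrite vS in h.
have BS : B \subset S by rewrite -h subsetIl.
have bs x : x \in B -> x \in S := subsetP BS x.
have SAB : S :&: A :&: B \subset [set v].
  by apply/subsetP => x; rewrite !inE => /andP[/andP[_ xA] xB]; rewrite (AIBx xA xB).
have vSA : v \in S :&: A by rewrite inE vS vA.
case/and4P: tA => _ sFA tSA tASA.
have eC : A :\: (S :&: A) = ~: S.
  apply/setP => x; rewrite !inE; move: (covx x) (bs x); bcase.
have eS : S = (S :&: A) :|: B.
  apply/setP => x; rewrite !inE; move: (covx x) (bs x); bcase.
apply/and4P; split.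
- exact: subsetT.
- apply/subsetP => e eF; rewrite setTD.
  move: eF (cover e) (subsetP sFA e) (bs (ends e).1) (bs (ends e).2); rewrite eC; bcase.
- have sT : F :&: IE S \subset IE (S :&: A) :|: IE B.
    apply/subsetP => e; move: (cover e); bcase.
  rewrite {1}eS (tree_glue SAB vSA vB sT).
  have -> : F :&: IE S :&: IE (S :&: A) = F :&: IE A :&: IE (S :&: A).
    apply/setP => e; bcase.
  have -> : F :&: IE S :&: IE B = F :&: IE B.
    apply/setP => e; move: (bs (ends e).1) (bs (ends e).2); bcase.
  by rewrite tSA tB.
- rewrite setTD -eC.
  have -> : F :&: IE (A :\: (S :&: A)) = F :&: IE A :&: IE (A :\: (S :&: A)).
    apply/setP => e; bcase.
  exact: tASA.
Qed.

Lemma fwd (S : {set V}) (F : {set E}) :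
  two_forest ends setT S F -> v \in S -> ~: S \subset A -> aP S F.
Proof.
case/and4P => _ sF t1 t2 vS sCA; rewrite setTD in sF t2.
have ca x : x \notin S -> x \in A by move=> h; apply: (subsetP sCA); rewrite inE.
have bs x : x \in B -> x \in S.
  move=> xB; apply/negPn/negP => xn; have := AIBx (ca x xn) xB => ev.
  by move: xn; rewrite ev vS.
have BS : B \subset S by apply/subsetP; exact: bs.
have SAB : S :&: A :&: B \subset [set v].
  by apply/subsetP => x; rewrite !inE => /andP[/andP[_ xA] xB]; rewrite (AIBx xA xB).
have vSA : v \in S :&: A by rewrite inE vS vA.
have eC : A :\: (S :&: A) = ~: S.
  apply/setP => x; rewrite !inE; move: (covx x) (bs x); bcase.
have eS : S = (S :&: A) :|: B.
  apply/setP => x; rewrite !inE; move: (covx x) (bs x); bcase.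
have sT : F :&: IE S \subset IE (S :&: A) :|: IE B.
  apply/subsetP => e; move: (cover e); bcase.
move: t1; rewrite {1}eS (tree_glue SAB vSA vB sT) => /andP[tSA tB].
have e1 : F :&: IE S :&: IE (S :&: A) = F :&: IE A :&: IE (S :&: A).
  apply/setP => e; bcase.
have e2 : F :&: IE S :&: IE B = F :&: IE B.
  apply/setP => e; move: (bs (ends e).1) (bs (ends e).2); bcase.
rewrite e1 in tSA; rewrite e2 in tB.
apply/and3P; split.
- apply/and4P; split.
  + exact: subsetIr.
  + rewrite eC; apply/subsetP => e; move: (subsetP sF e); bcase.
  + exact: tSA.
  + rewrite eC.
    have -> : F :&: IE A :&: IE (~: S) = F :&: IE (~: S).
      apply/setP => e; move: (ca (ends e).1) (ca (ends e).2); bcase.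
    exact: t2.
- exact: tB.
- by rewrite vS; apply/eqP/setIidPr.
Qed.
End Sep.

Lemma tree_on0 (T : {set E}) : tree_on ends set0 T = false.
Proof. by rewrite /tree_on eqxx. Qed.

Section Char.
Variables (A B : {set V}) (v : V).
Hypothesis AUB : A :|: B = setT.
Hypothesis AIB : A :&: B = [set v].
Hypothesis cover : forall e, e \in IE A :|: IE B.

Let AUB' : B :|: A = setT. Proof. by rewrite setUC. Qed.
Let AIB' : B :&: A = [set v]. Proof. by rewrite setIC. Qed.
Let cover' e : e \in IE B :|: IE A. Proof. by rewrite setUC. Qed.

Lemma bwd (S : {set V}) (F : {set E}) : aP A B v S F -> two_forest ends setT S F.
Proof.
case vS: (v \in S) => h; first exact: (bwd_v AUB AIB cover vS h).
rewrite -(aP_compl A B v) in h.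
have vS' : v \in ~: S by rewrite inE vS.
have := tf_compl (subsetT _) (bwd_v AUB AIB cover vS' h).
by rewrite setTD setCK.
Qed.

Lemma bwd' (S : {set V}) (F : {set E}) : aP B A v S F -> two_forest ends setT S F.
Proof.
case vS: (v \in S) => h; first exact: (bwd_v AUB' AIB' cover' vS h).
rewrite -(aP_compl B A v) in h.
have vS' : v \in ~: S by rewrite inE vS.
have := tf_compl (subsetT _) (bwd_v AUB' AIB' cover' vS' h).
by rewrite setTD setCK.
Qed.

Lemma fwd_v (S : {set V}) (F : {set E}) : two_forest ends setT S F -> v \in S ->
  aP A B v S F || aP B A v S F.
Proof.
move=> tf vS; case/orP: (comp AUB AIB cover tf vS) => sub.
- by rewrite (fwd AUB AIB cover tf vS sub).
- by rewrite (fwd AUB' AIB' cover' tf vS sub) orbT.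
Qed.

Lemma char (S : {set V}) (F : {set E}) :
  two_forest ends setT S F = aP A B v S F || aP B A v S F.
Proof.
apply/idP/idP.
- move=> tf; case vS: (v \in S); first exact: fwd_v.
  have tf' : two_forest ends setT (~: S) F.
    by have := tf_compl (subsetT S) tf; rewrite setTD.
  have vS' : v \in ~: S by rewrite inE vS.
  by have := fwd_v tf' vS'; rewrite (aP_compl A B v) (aP_compl B A v).
- by case/orP; [exact: bwd | exact: bwd'].
Qed.

Lemma aP_disj (S : {set V}) (F : {set E}) : aP A B v S F -> ~~ aP B A v S F.
Proof.
case/and3P => _ _ /eqP h; apply/negP => /and3P[/and4P[_ _ t1 t2] _ _].
by move: h t1 t2; case: (v \in S) => ->; rewrite ?setDv tree_on0.
Qed.
End Char.
End G.

Local Open Scope ring_scope.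

Section Sum.
Variables (V E : finType) (ends : E -> V * V) (R : realFieldType).
Local Notation IE := (induced_edges ends).
Variables (A B : {set V}) (v : V).
Hypothesis AUB : A :|: B = setT.
Hypothesis AIB : A :&: B = [set v].
Hypothesis cover : forall e, e \in IE A :|: IE B.
Hypothesis disjE : forall e, ~~ ((e \in IE A) && (e \in IE B)).
Variables (rho : V -> 'rV[R]_4) (c : 'rV[R]_4) (alpha : E -> R).
Hypothesis rhov : rho v = 0.
Hypothesis hc : \sum_(u in B :\ v) rho u = c.

Let vA : v \in A. Proof. by have := set11 v; rewrite -AIB inE => /andP[]. Qed.
Let vB : v \in B. Proof. by have := set11 v; rewrite -AIB inE => /andP[]. Qed.
Let covx x : (x \in A) || (x \in B).
Proof. by have := in_setT x; rewrite -AUB inE. Qed.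
Let AIBx x : x \in A -> x \in B -> x = v.
Proof. by move=> xA xB; have := in_setI x A B; rewrite xA xB AIB inE => /eqP. Qed.

Definition hmap (j : {set V} * ({set E} * {set E})) : {set V} * {set E} :=
  (j.1 :|: (if v \in j.1 then B else set0), j.2.1 :|: j.2.2).
Definition hinv (i : {set V} * {set E}) : {set V} * ({set E} * {set E}) :=
  (i.1 :&: A, (i.2 :&: IE A, i.2 :&: IE B)).

Lemma mom_eq (SA : {set V}) : SA \subset A ->
  mom rho (SA :|: (if v \in SA then B else set0)) =
  mom (fun u => if u == v then c else rho u) SA.
Proof.
move=> sSA; rewrite /mom; case vS: (v \in SA).
- rewrite (bigD1 v) /=; last by rewrite inE vS.
  rewrite [in RHS](bigD1 v) //= eqxx rhov add0r.
  have -> : \sum_(i | (i \in SA :|: B) && (i != v)) rho i =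
            \sum_(i in [predU SA :\ v & B :\ v]) rho i.
    by apply: eq_bigl => u; rewrite !inE; case: (u == v); case: (u \in SA); case: (u \in B).
  rewrite bigU /=; last first.
    rewrite -setI_eq0; apply/eqP/setP => x; rewrite !inE.
    case xv: (x == v) => //=; case xS: (x \in SA) => //=; apply/negP => xB.
    by move/eqP: xv; apply; apply: AIBx (subsetP sSA x xS) xB.
  rewrite hc [in RHS]addrC; congr (_ + _); apply: eq_big => [u|u].
    by rewrite !inE andbC.
  by rewrite !inE => /andP[/negbTE -> _].
- rewrite setU0; apply: eq_bigr => u uS; case: eqP => // uv.
  by move: vS; rewrite -uv uS.
Qed.


Lemma hh (SA : {set V}) (FA TB : {set E}) : SA \subset A -> FA \subset IE A -> TB \subset IE B ->
  hinv (hmap (SA, (FA, TB))) = (SA, (FA, TB)).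
Proof.
move=> sSA sFA sTB; rewrite /hinv /hmap /=; congr (_, (_, _)).
- case vS: (v \in SA).
  + apply/setP => x; have f x' : x' \in A -> x' \in B -> x' \in SA.
      by move=> xA xB; rewrite (AIBx xA xB).
    move: (f x) (subsetP sSA x); bcase.
  + by rewrite setU0; apply/setIidPl.
- apply/setP => e; move: (subsetP sFA e) (subsetP sTB e) (disjE e); bcase.
- apply/setP => e; move: (subsetP sFA e) (subsetP sTB e) (disjE e); bcase.
Qed.

Lemma hmap_hinv (i : {set V} * {set E}) : aP ends A B v i.1 i.2 -> hmap (hinv i) = i.
Proof.
case: i => S F /=; case/and3P => _ _ /eqP h; rewrite /hmap /hinv /=; congr (_, _).
- rewrite inE vA andbT; case vS: (v \in S) h => /setP h; apply/setP => x;
  move: (covx x) (h x); bcase.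
- by rewrite -setIUr; apply/setIidPl; apply/subsetP => e _; exact: cover.
Qed.

Lemma prod_eq (FA TB : {set E}) : FA \subset IE A -> TB \subset IE B ->
  \prod_(e in IE setT :\: (FA :|: TB)) alpha e =
  \prod_(e in IE A :\: FA) alpha e * \prod_(e in IE B :\: TB) alpha e.
Proof.
move=> sFA sTB; rewrite -bigU /=.
  apply: eq_bigl => e; move: (subsetP sFA e) (subsetP sTB e) (disjE e) (cover e); bcase.
rewrite -setI_eq0; apply/eqP/setP => e; move: (disjE e); bcase.
Qed.

Lemma cond_iff (SA : {set V}) (FA TB : {set E}) :
  aP ends A B v (hmap (SA, (FA, TB))).1 (hmap (SA, (FA, TB))).2 &&
    (hinv (hmap (SA, (FA, TB))) == (SA, (FA, TB)))
  = two_forest ends A SA FA && tree_on ends B TB.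
Proof.
apply/idP/idP.
- case/andP => a /eqP; rewrite /hinv /hmap /= => -[e1 e2 e3].
  by move: a; rewrite /aP /= e1 e2 e3 => /and3P[-> -> _].
- case/andP => tf st.
  have sSA : SA \subset A by case/and4P: tf.
  have sFA : FA \subset IE A.
    case/and4P: tf => _ s _ _; apply: subset_trans s _; rewrite subUset.
    by rewrite !IE_mono ?subsetDl.
  have sTB : TB \subset IE B by case/and4P: st.
  rewrite hh // eqxx andbT.
  have := hh sSA sFA sTB; rewrite /hinv /hmap /= => -[e1 e2 e3].
  rewrite /aP /= e1 e2 e3 tf st /=.
  case vS: (v \in SA).
  + by rewrite inE vS /=; apply/eqP/setP => x; bcase.
  + rewrite setU0 vS; apply/eqP/setP => x; have f x' : x' \in A -> x' \in B -> x' == v.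
      by move=> xA xB; rewrite (AIBx xA xB).
    move: (f x) (subsetP sSA x); case: eqP => [->|_]; rewrite !inE ?vS; bcase.
Qed.


Lemma sumA :
  \sum_(S : {set V}) \sum_(F : {set E} | aP ends A B v S F)
     msq (mom rho S) * \prod_(e in IE setT :\: F) alpha e
  = (\sum_(S : {set V}) \sum_(F : {set E} | two_forest ends A S F)
       msq (mom (fun u => if u == v then c else rho u) S) * \prod_(e in IE A :\: F) alpha e)
    * psi ends B alpha.
Proof.
rewrite /psi big_distrl /=.
have -> : forall (G : {set V} -> {set E} -> R) (P : {set V} -> pred {set E}) (H : {set E} -> R),
    \sum_(S : {set V}) (\sum_(F | P S F) G S F) * (\sum_(T | tree_on ends B T) H T)
    = \sum_(p : {set V} * ({set E} * {set E}) | true && (P p.1 p.2.1 && tree_on ends B p.2.2))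
         G p.1 p.2.1 * H p.2.2.
  move=> G P H.
  transitivity (\sum_(S : {set V}) \sum_(q : {set E} * {set E} | P S q.1 && tree_on ends B q.2)
                   G S q.1 * H q.2).
    by apply: eq_bigr => S _; rewrite big_distrlr /= pair_big_dep.
  exact: (pair_big_dep xpredT (fun S (q : {set E} * {set E}) => P S q.1 && tree_on ends B q.2)
            (fun S q => G S q.1 * H q.2)).
rewrite pair_big_dep (reindex_onto hmap hinv); last by case=> S F /= H; apply: hmap_hinv.
apply: eq_big => [[SA [FA TB]]|[SA [FA TB]]] /=.
  by rewrite -cond_iff.
rewrite cond_iff => /andP[tf st].
have sSA : SA \subset A by case/and4P: tf.
have sFA : FA \subset IE A.
  case/and4P: tf => _ s _ _; apply: subset_trans s _; rewrite subUset.
  by rewrite !IE_mono ?subsetDl.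
have sTB : TB \subset IE B by case/and4P: st.
by rewrite mom_eq // prod_eq // mulrA.
Qed.

End Sum.

Unset Implicit Arguments. Set Strict Implicit. Set Printing Implicit Defensive.

Lemma sum_two (R : realFieldType) (V : finType) (rho : V -> 'rV[R]_4) (X Y : {set V}) (a b : V) :
  (forall u, u \notin X -> rho u = 0) -> a != b -> X :&: Y = [set a; b] ->
  \sum_(u in Y) rho u = rho a + rho b.
Proof.
move=> r0 ab hXY.
rewrite (bigID (fun u => u \in X)) /= [X in _ + X]big1 ?addr0; last first.
  by move=> u /andP[_ /r0].
rewrite (eq_bigl (fun u => u \in X :&: Y)); last by move=> u; rewrite inE andbC.
by rewrite hXY big_setU1 /= ?big_set1 // inE.
Qed.

Theorem mainTheorem10 (R : realFieldType) (V E : finType) (ends : E -> V * V)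
    (alpha m : E -> R) (rho : V -> 'rV[R]_4)
    (x1 x2 x3 x4 v : V) (A B : {set V}) :
  (forall e, (ends e).1 != (ends e).2) ->
  (forall e, m e = 0) ->
  uniq [:: x1; x2; x3; x4] ->
  (forall u, u \notin [set x1; x2; x3; x4] -> rho u = 0) ->
  \sum_(u : V) rho u = 0 ->
  msq (rho x1) = 0 -> msq (rho x2) = 0 -> msq (rho x3) = 0 -> msq (rho x4) = 0 ->
  one_separation ends A B ->
  A :&: B = [set v] ->
  [set x1; x2; x3; x4] :&: (A :\ v) = [set x1; x2] ->
  [set x1; x2; x3; x4] :&: (B :\ v) = [set x3; x4] ->
  let rhoA := fun u => if u == v then rho x3 + rho x4 else rho u in
  let rhoB := fun u => if u == v then rho x1 + rho x2 else rho u in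
  phi ends setT rho alpha m
  = phi ends A rhoA alpha m * psi ends B alpha
    + phi ends B rhoB alpha m * psi ends A alpha.
Proof.
move=> loopless m0 uq rho0 _ _ _ _ _ sep AIB hXA hXB rhoA rhoB.
case/andP: sep => /andP[/eqP AUB _] /forallP hsep.
have covx x : (x \in A) || (x \in B) by have := in_setT x; rewrite -AUB inE.
have AIBx x : x \in A -> x \in B -> x = v.
  by move=> xA xB; have := in_setI x A B; rewrite xA xB AIB inE => /eqP.
have cover e : e \in induced_edges ends A :|: induced_edges ends B.
  move: (hsep e) (covx (ends e).1) (covx (ends e).2); bcase.
have disjE e : ~~ ((e \in induced_edges ends A) && (e \in induced_edges ends B)).
  rewrite !inE; apply/negP => /andP[/andP[a1 a2] /andP[b1 b2]].
  by move: (loopless e); rewrite (AIBx _ a1 b1) (AIBx _ a2 b2) eqxx.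
have AUB' : B :|: A = setT by rewrite setUC.
have AIB' : B :&: A = [set v] by rewrite setIC.
have cover' e : e \in induced_edges ends B :|: induced_edges ends A by rewrite setUC.
have disjE' e : ~~ ((e \in induced_edges ends B) && (e \in induced_edges ends A)).
  by rewrite andbC.
move: uq; rewrite /= !inE !negb_or => /and4P[/and3P[n12 n13 n14] /andP[n23 n24] n34 _].
have nv a : a \in [set x1; x2; x3; x4] :&: (A :\ v) -> a != v.
  by rewrite !inE => /andP[_ /andP[]].
have nv' a : a \in [set x1; x2; x3; x4] :&: (B :\ v) -> a != v.
  by rewrite !inE => /andP[_ /andP[]].
have rhov : rho v = 0.
  apply: rho0; rewrite !inE !negb_or -!andbA; apply/and4P; split; rewrite eq_sym.
  - by apply: nv; rewrite hXA !inE eqxx.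
  - by apply: nv; rewrite hXA !inE eqxx orbT.
  - by apply: nv'; rewrite hXB !inE eqxx.
  - by apply: nv'; rewrite hXB !inE eqxx orbT.
have hcB : \sum_(u in B :\ v) rho u = rho x3 + rho x4 := @sum_two _ _ rho _ _ _ _ rho0 n34 hXB.
have hcA : \sum_(u in A :\ v) rho u = rho x1 + rho x2 := @sum_two _ _ rho _ _ _ _ rho0 n12 hXA.
have m0s (X : {set E}) : \sum_(e in X) alpha e * m e ^+ 2 = 0.
  by apply: big1 => e _; rewrite m0 expr2 !mulr0.
rewrite /phi !m0s !mulr0 !addr0.
have -> : \sum_(S : {set V}) \sum_(F : {set E} | two_forest ends setT S F)
      msq (mom rho S) * \prod_(e in induced_edges ends setT :\: F) alpha e
    = \sum_(S : {set V}) \sum_(F : {set E} | aP ends A B v S F)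
      msq (mom rho S) * \prod_(e in induced_edges ends setT :\: F) alpha e
    + \sum_(S : {set V}) \sum_(F : {set E} | aP ends B A v S F)
      msq (mom rho S) * \prod_(e in induced_edges ends setT :\: F) alpha e.
  rewrite -big_split; apply: eq_bigr => S _.
  rewrite (bigID (fun F => aP ends A B v S F)) /=; congr (_ + _); apply: eq_bigl => F.
  - by rewrite (char AUB AIB cover); move: (aP ends A B v S F) (aP ends B A v S F) => [] [].
  - rewrite (char AUB AIB cover).
    move: (@aP_disj _ _ ends A B v S F).
    by move: (aP ends A B v S F) (aP ends B A v S F) => [] [] // /(_ isT).
rewrite (sumA AUB AIB cover disjE alpha rhov hcB).
rewrite (sumA AUB' AIB' cover' disjE' alpha rhov hcA).
by rewrite mulrDr !mulrA.
Qed.
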